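(* Let $n\ge 5$ be odd, $k=\frac{n-3}{2}$, $G=(V,E)=K_n$, and let $C=(v_1,\dots,v_{2k+1})$ be a cycle of length $n-2$ in $G$, with $s,t$ the two vertices of $G$ not on $C$. Then the $C$-induced constraint \[ x_{\{s,t\}}+k\cdot x(\delta(V(C)))+\sum_{e\in E[V\setminus\{s,t\}]}\ell(e)\,x_e\ \ge\ 2k+1 \] is valid for $P^{\uparrow}_{\mathrm{odd}}(G)$ and defines a facet of it.
   Context: $K_n$ is the complete graph on $n$ vertices. For a graph $G=(V,E)$, $P_{\mathrm{odd}}(G)=\operatorname{conv}\{\chi^D\colon D \text{ an odd cycle of } G\}$ and $P^{\uparrow}_{\mathrm{odd}}(G)=P_{\mathrm{odd}}(G)+\mathbb{R}^E_{\ge0}$. $\delta(V(C))$ is the set of edges with exactly one endpoint on $C$, $E[S]$ the set of edges with both endpoints in $S$, and $x(S)=\sum_{e\in S}x_e$. For $i\ne j$, $\ell(\{v_i,v_j\})=|j-i|$ if $|j-i|$ is odd and $\ell(\{v_i,v_j\})=2k+1-|j-i|$ otherwise (the length of the odd-length path on $C$ between $v_i$ and $v_j$). *)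

(* Defs.v *)
From mathcomp Require Import all_boot all_order all_algebra.
Set Implicit Arguments. Unset Strict Implicit. Unset Printing Implicit Defensive.
Import Order.TTheory GRing.Theory Num.Theory.
Local Open Scope ring_scope.

Definition edge (n : nat) := {e : {set 'I_n} | #|e| == 2%N}.

Definition is_odd_cycle (n : nat) (D : {set edge n}) : Prop :=
  exists (m : nat) (v : 'I_m -> 'I_n),
    [/\ odd m, (3 <= m)%N, injective v &
        D = [set e : edge n | [exists i : 'I_m, val e == [set v i; v (ordS i)]]]].

Definition chi (R : numDomainType) (n : nat) (D : {set edge n}) : edge n -> R :=
  fun e => if e \in D then 1 else 0.

Definition Podd (R : numDomainType) (n : nat) (x : edge n -> R) : Prop :=
  exists lam : {set edge n} -> R,
    [/\ forall D, 0 <= lam D,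
        forall D, lam D != 0 -> is_odd_cycle D,
        \sum_D lam D = 1 &
        forall e, x e = \sum_D lam D * chi R D e].

Definition Podd_up (R : numDomainType) (n : nat) (x : edge n -> R) : Prop :=
  exists y, Podd y /\ forall e, y e <= x e.

Definition aff_indep (R : numDomainType) (T : finType) (m : nat)
  (p : 'I_m -> T -> R) : Prop :=
  forall mu : 'I_m -> R,
    \sum_i mu i = 0 -> (forall e, \sum_i mu i * p i e = 0) -> forall i, mu i = 0.

Definition has_affdim (R : numDomainType) (T : finType) (S : (T -> R) -> Prop)
  (d : nat) : Prop :=
  (exists p : 'I_d.+1 -> T -> R, (forall i, S (p i)) /\ aff_indep p) /\
  (forall p : 'I_d.+2 -> T -> R, (forall i, S (p i)) -> ~ aff_indep p).

Definition valid_ineq (R : numDomainType) (T : finType) (S : (T -> R) -> Prop)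
  (f : (T -> R) -> R) (b : R) : Prop := forall x, S x -> b <= f x.

Definition defines_facet (R : numDomainType) (T : finType) (S : (T -> R) -> Prop)
  (f : (T -> R) -> R) (b : R) : Prop :=
  valid_ineq S f b /\
  exists d, has_affdim S d.+1 /\ has_affdim (fun x => S x /\ f x = b) d.

(* l({v_i,v_j}) for the cycle of length m = 2k+1: length of the odd path *)
Definition ell_idx (m : nat) (i j : 'I_m) : nat :=
  let d := if (i <= j)%N then (j - i)%N else (i - j)%N in
  if odd d then d else (m - d)%N.

Definition ell (n m : nat) (c : 'I_m -> 'I_n) (e : edge n) : nat :=
  if [pick ij : 'I_m * 'I_m | (ij.1 < ij.2)%N && (val e == [set c ij.1; c ij.2])]
  is Some ij then ell_idx ij.1 ij.2 else 0%N.

Definition VC (n m : nat) (c : 'I_m -> 'I_n) : {set 'I_n} := [set c i | i in 'I_m].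

Definition C_lhs (R : numDomainType) (n k : nat) (c : 'I_(2 * k + 1) -> 'I_n)
  (s t : 'I_n) (x : edge n -> R) : R :=
  \sum_(e : edge n | val e == [set s; t]) x e
  + k%:R * \sum_(e : edge n | #|val e :&: VC c| == 1%N) x e
  + \sum_(e : edge n | val e \subset ~: [set s; t]) (ell c e)%:R * x e.

(* Main.v *)
Require Import Defs.
From mathcomp Require Import all_boot all_order all_algebra.
From mathcomp Require Import zify ring lra.
Set Implicit Arguments. Unset Strict Implicit. Unset Printing Implicit Defensive.
Import Order.TTheory GRing.Theory Num.Theory.
Local Open Scope ring_scope.

Lemma set2_eq (T : finType) (a b c d : T) : a != b ->
  [set a; b] = [set c; d] -> (a = c /\ b = d) \/ (a = d /\ b = c).
Proof.
move=> hab h.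
have ha : a \in [set c; d] by rewrite -h !inE eqxx.
have hb : b \in [set c; d] by rewrite -h !inE eqxx orbT.
move: ha hb; rewrite !inE => ha hb.
case: (eqVneq a c) => [ac|nac].
  left; split => //; subst a; case/orP: hb => /eqP // hb.
  by subst; rewrite eqxx in hab.
right; rewrite (negbTE nac) /= in ha; move/eqP: ha => ad; split => //.
subst a; case/orP: hb => /eqP // hb; subst; rewrite eqxx in hab; done.
Qed.

Lemma ordS_neq L (i : 'I_L) : (2 <= L)%N -> ordS i != i.
Proof.
move=> hL; apply/eqP => /(congr1 val) /=.
have := ltn_ord i.
case: (ltnP i.+1 L) => h1 h2.
  rewrite modn_small //; lia.
have -> : i.+1 = L by lia.
rewrite modnn; lia.
Qed.

Lemma ordS2_neq L (i : 'I_L) : (3 <= L)%N -> ordS (ordS i) != i.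
Proof.
move=> hL; apply/eqP => /(congr1 val) /=.
have := ltn_ord i.
case: (ltnP i.+1 L) => h1 h2.
  rewrite (modn_small h1).
  case: (ltnP i.+2 L) => h3.
    rewrite modn_small //; lia.
  have -> : i.+2 = L by lia.
  rewrite modnn; lia.
have -> : i.+1 = L by lia.
rewrite modnn modn_small; lia.
Qed.


Lemma set2_eq_l (T : finType) (a b b' : T) : a != b -> a != b' ->
  ([set a; b] == [set a; b']) = (b == b').
Proof.
move=> h1 h2; apply/eqP/eqP => [h|->] //.
case: (set2_eq h1 h) => [[_ ->] // | [ab' ba]].
by rewrite ba eqxx in h1.
Qed.

Lemma pick_some (T : finType) (P : pred T) i : (forall j, P j = (j == i)) -> [pick j | P j] = Some i.
Proof.
move=> h; case: pickP => [j|hn]; first by rewrite h => /eqP ->.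
by have := hn i; rewrite h eqxx.
Qed.

Lemma pick_none (T : finType) (P : pred T) : (forall j, P j = false) -> [pick j | P j] = None.
Proof. by move=> h; case: pickP => [j|//]; rewrite h. Qed.

Lemma iter_ordS L (i : 'I_L) j : val (iter j (@ordS L) i) = ((i + j) %% L)%N.
Proof.
elim: j => [|j IH] /=; first by rewrite addn0 modn_small.
by rewrite IH -addn1 modnDml addn1 addnS.
Qed.

Lemma alt_zero (R : realFieldType) L (f : 'I_L -> R) : odd L ->
  (forall i, f (ordS i) = - f i) -> forall i, f i = 0.
Proof.
move=> hL hf i.
have H : forall j, f (iter j (@ordS L) i) = (-1) ^+ j * f i.
  elim=> [|j IH] /=; first by rewrite mul1r.
  by rewrite hf IH exprS mulNr mul1r mulNr.
have hi : iter L (@ordS L) i = i.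
  by apply: val_inj; rewrite iter_ordS modnDr modn_small.
have := H L; rewrite hi -signr_odd hL expr1 mulN1r => h; lra.
Qed.
Lemma odd_sum_ord L (F : 'I_L -> nat) : (forall i, odd (F i)) -> odd (\sum_(i < L) F i) = odd L.
Proof.
move=> hF.
rewrite (big_morph odd oddD (erefl : odd 0 = false)).
rewrite (eq_bigr (fun _ => true)); last by move=> i _; rewrite hF.
rewrite big_const_ord.
by elim: L {F hF} => //= L ->.
Qed.

Section Wind.
Variable k : nat.
Local Notation m := (2 * k + 1)%N.

Definition distn (a b : nat) := if (a <= b)%N then (b - a)%N else (a - b)%N.
Definition Zf (a b : nat) : int := if odd (distn a b) then 0 else if (a < b)%N then -1 else 1.
Definition Df (a b : nat) : int := b%:Z - a%:Z + m%:Z * Zf a b.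
Definition Wf (a b : nat) : int := if Df a b < 0 then - Df a b else 0.

Lemma ell_odd (a b : 'I_m) : a != b -> odd (ell_idx a b).
Proof.
move=> hab; rewrite /ell_idx.
have ha := ltn_ord a; have hb := ltn_ord b.
have hab' : nat_of_ord a != nat_of_ord b by [].
case: ifP => ho //.
rewrite oddB; last by case: (leqP a b) => _; lia.
by rewrite ho oddD oddM.
Qed.

Lemma ell_DW (a b : 'I_m) :
  [/\ (ell_idx a b)%:Z = Df a b + 2 * Wf a b, Df a b <= (ell_idx a b)%:Z
    & - Df a b <= (ell_idx a b)%:Z].
Proof.
have ha := ltn_ord a; have hb := ltn_ord b.
rewrite /ell_idx /Wf /Df /Zf /distn.
case: (leqP a b) => h1; case: ifP => ho; case: (ltnP a b) => h2;
  case: ifP => h3; split; lia.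
Qed.

Lemma winding L (p : 'I_L -> 'I_m) : odd L -> (forall i, p i != p (ordS i)) ->
  (m <= \sum_i ell_idx (p i) (p (ordS i)))%N.
Proof.
move=> hL hp.
set S := (\sum_i _)%N.
have hodd : odd S by rewrite /S odd_sum_ord // => i; apply: ell_odd.
have hSz : (S%:Z = \sum_i (ell_idx (p i) (p (ordS i)))%:Z).
  by rewrite -natz /S natr_sum; apply: eq_bigr => i _; rewrite natz.
have h1 : S%:Z = \sum_i Df (p i) (p (ordS i)) + 2 * \sum_i Wf (p i) (p (ordS i)).
  rewrite hSz mulr_sumr -big_split; apply: eq_bigr => i _.
  by case: (ell_DW (p i) (p (ordS i))).
have ht : \sum_i ((p (ordS i))%:Z) = \sum_i ((p i)%:Z).
  by rewrite [RHS](reindex_inj (@ordS_inj L)).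
have h2 : \sum_i Df (p i) (p (ordS i)) = m%:Z * \sum_i Zf (p i) (p (ordS i)).
  rewrite /Df big_split /= sumrB ht subrr add0r mulr_sumr //.
have h3 : \sum_i Df (p i) (p (ordS i)) <= S%:Z.
  by rewrite hSz; apply: ler_sum => i _; case: (ell_DW (p i) (p (ordS i))).
have h4 : - \sum_i Df (p i) (p (ordS i)) <= S%:Z.
  by rewrite hSz -sumrN; apply: ler_sum => i _; case: (ell_DW (p i) (p (ordS i))).
move: h1 h3 h4; rewrite h2.
set Zs := \sum_i Zf _ _; set Ws := \sum_i Wf _ _.
have := odd_double_half S; rewrite hodd => hS.
move=> h1 h3 h4.
have [hz|[hz|hz]] : (Zs = 0 \/ 1 <= Zs \/ Zs <= -1)%R by lia.
- move: h1; rewrite hz mulr0 add0r; lia.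
- have : (m%:Z <= m%:Z * Zs) by nia.
  lia.
- have : (m%:Z <= - (m%:Z * Zs)) by nia.
  lia.
Qed.
End Wind.
Section LinAlg.
Variable R : realFieldType.
Variable T : finType.

Lemma sum_enum (F : T -> R) : \sum_(e : T) F e = \sum_(j < #|T|) F (enum_val j).
Proof. by rewrite (reindex (@enum_val T T)) //; apply: onW_bij; apply: enum_val_bij. Qed.

Definition ptmx r (p : 'I_r -> T -> R) : 'M[R]_(r, 1 + #|T|) :=
  row_mx (const_mx 1) (\matrix_(i, j) p i (enum_val j)).

Lemma ptmx_ker r (p : 'I_r -> T -> R) (u : 'rV_r) : u *m ptmx p = 0 ->
  (\sum_i u 0 i = 0) /\ (forall e, \sum_i u 0 i * p i e = 0).
Proof.
move=> H; split.
  have := congr1 (fun M : 'rV_(1 + #|T|) => M 0 (lshift _ 0)) H.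
  rewrite /ptmx mul_mx_row row_mxEl !mxE => h; apply: etrans h.
  by apply: eq_bigr => i _; rewrite mxE mulr1.

move=> e.
have := congr1 (fun M : 'rV_(1 + #|T|) => M 0 (rshift 1 (enum_rank e))) H.
rewrite /ptmx mul_mx_row row_mxEr !mxE => h; apply: etrans h.
by apply: eq_bigr => i _; rewrite mxE enum_rankK.
Qed.

Lemma ptmx_free r (p : 'I_r -> T -> R) : aff_indep p -> row_free (ptmx p).
Proof.
move=> hind; apply/inj_row_free => u hu.
have [h1 h2] := ptmx_ker hu.
have h0 := hind (fun i => u 0 i) h1 h2.
by apply/rowP => i; rewrite mxE h0.
Qed.

Lemma aff_dep_full r (p : 'I_r -> T -> R) : (#|T|.+1 < r)%N -> ~ aff_indep p.
Proof.
move=> hr /ptmx_free /eqP rf.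
have := rank_leq_col (ptmx p); rewrite rf; lia.
Qed.

Lemma aff_dep_face (p : 'I_#|T|.+1 -> T -> R) (a : T -> R) (b : R) (e0 : T) :
  a e0 != 0 -> (forall i, \sum_e a e * p i e = b) -> ~ aff_indep p.
Proof.
move=> ha hp /ptmx_free rf.
have rfT : row_free (ptmx p)^T.
  by rewrite /row_free mxrank_tr (eqP rf) add1n.
pose v : 'rV[R]_(1 + #|T|) := row_mx (const_mx (- b)) (\row_j a (enum_val j)).
have hv : v *m (ptmx p)^T = 0.
  apply/rowP => i; rewrite /v /ptmx tr_row_mx mul_row_col !mxE.
  rewrite big_ord1 !mxE mulr1 -(hp i) sum_enum addrC; apply/eqP; rewrite subr_eq0; apply/eqP.
  by apply: eq_bigr => j _; rewrite !mxE.
have := row_free_inj rfT; move/(_ _ v 0); rewrite mul0mx => /(_ hv) v0.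
have := congr1 (fun M : 'rV_(1 + #|T|) => M 0 (rshift 1 (enum_rank e0))) v0.
by rewrite /v row_mxEr !mxE enum_rankK => /eqP; rewrite (negbTE ha).
Qed.

Lemma indep_orth (P : T -> T -> R) :
  (forall w : T -> R, (forall f, \sum_e P f e * w e = 0) -> forall e, w e = 0) ->
  forall mu : T -> R, (forall e, \sum_f mu f * P f e = 0) -> forall f, mu f = 0.
Proof.
move=> horth mu hmu f.
pose A : 'M[R]_(#|T|) := \matrix_(i, j) P (enum_val i) (enum_val j).
have rfT : row_free A^T.
  apply/inj_row_free => v hv.
  have hw := horth (fun e => v 0 (enum_rank e)).
  have : forall e, v 0 (enum_rank e) = 0.
    apply: hw => g.
    have := congr1 (fun M : 'rV_#|T| => M 0 (enum_rank g)) hv.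
    rewrite !mxE sum_enum => h; apply: etrans h; apply: eq_bigr => j _.
    by rewrite !mxE enum_valK enum_rankK mulrC.
  move=> h; apply/rowP => j; rewrite mxE -(enum_valK j); exact: h.
have rf : row_free A by rewrite /row_free -mxrank_tr.
pose u : 'rV[R]_#|T| := \row_i mu (enum_val i).
have : u *m A = 0 *m A.
  rewrite mul0mx; apply/rowP => j; rewrite !mxE; apply: etrans (hmu (enum_val j)); rewrite sum_enum.
  by apply: eq_bigr => i _; rewrite !mxE.
move/(row_free_inj rf) => u0.
have := congr1 (fun M : 'rV_#|T| => M 0 (enum_rank f)) u0.
by rewrite !mxE enum_rankK.
Qed.

End LinAlg.
Section Main.
Variable R : realFieldType.
Variables (n k : nat) (c : 'I_(2 * k + 1) -> 'I_n) (s t : 'I_n).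
Hypothesis hk : (1 <= k)%N.
Hypothesis hn : n = (2 * k + 3)%N.
Hypothesis cinj : injective c.
Hypothesis hst : s != t.
Hypothesis hcs : forall i, c i != s.
Hypothesis hct : forall i, c i != t.

Local Notation m := (2 * k + 1)%N.
Local Notation E := (edge n).

Lemma e0_proof : #|[set s; t]| == 2%N.
Proof. by rewrite cards2 hst. Qed.
Definition e0 : E := exist _ [set s; t] e0_proof.

Definition mk (x y : 'I_n) : E := insubd e0 [set x; y].

Lemma mkE x y : x != y -> val (mk x y) = [set x; y].
Proof. by move=> h; rewrite /mk insubdK // unfold_in cards2 h. Qed.

Lemma mkC x y : mk x y = mk y x.
Proof. by rewrite /mk setUC. Qed.

Lemma edge_mk (e : E) : exists x y, x != y /\ e = mk x y.
Proof.
case: e => A hA; have [x [y [hxy hA']]] := cards2P _ hA.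
exists x, y; split => //; apply: val_inj; rewrite mkE //=.
Qed.

Definition cyc L (v : 'I_L -> 'I_n) : {set E} :=
  [set e : E | [exists i : 'I_L, val e == [set v i; v (ordS i)]]].

Lemma cyc_odd L (v : 'I_L -> 'I_n) : odd L -> (3 <= L)%N -> injective v ->
  is_odd_cycle (cyc v).
Proof. by move=> h1 h2 h3; exists L, v; split. Qed.

Lemma cyc_sum L (v : 'I_L -> 'I_n) (g : E -> R) : (3 <= L)%N -> injective v ->
  \sum_(e in cyc v) g e = \sum_(i < L) g (mk (v i) (v (ordS i))).
Proof.
move=> hL vinj.
have hne : forall i, v i != v (ordS i).
  by move=> i; rewrite (inj_eq vinj) eq_sym ordS_neq //; lia.
have -> : cyc v = [set mk (v i) (v (ordS i)) | i : 'I_L].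
  apply/setP => e; rewrite !inE; apply/existsP/imsetP.
    by case=> i /eqP hi; exists i => //; apply: val_inj; rewrite mkE.
  by case=> i _ ->; exists i; rewrite mkE.
rewrite big_imset //= => i j _ _ /(congr1 val); rewrite !mkE // => /set2_eq.
case/(_ (hne i)) => [[/vinj h _] // | [/vinj h1 /vinj h2]].
by have := ordS2_neq j hL; rewrite -h1 -h2 eqxx.
Qed.


Lemma card_VC : #|VC c| = m.
Proof. by rewrite /VC card_imset // card_ord. Qed.

Lemma cVC i : c i \in VC c.
Proof. by rewrite /VC; apply: imset_f. Qed.

Lemma sVC : s \notin VC c.
Proof. by apply/imsetP => -[i _ /eqP]; rewrite eq_sym (negbTE (hcs i)). Qed.

Lemma tVC : t \notin VC c.
Proof. by apply/imsetP => -[i _ /eqP]; rewrite eq_sym (negbTE (hct i)). Qed.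

Lemma vert_cases x : x = s \/ x = t \/ exists i, x = c i.
Proof.
have hS : VC c :|: [set s; t] = [set: 'I_n].
  apply/eqP; rewrite eqEcard subsetT /= cardsT card_ord cardsU cards2 hst card_VC.
  have -> : VC c :&: [set s; t] = set0.
    apply/setP => z; rewrite !inE; case: (eqVneq z s) => [->|_]; first by rewrite (negbTE sVC).
    case: (eqVneq z t) => [->|_]; first by rewrite (negbTE tVC).
    by rewrite andbF.
  rewrite cards0; lia.
have : x \in VC c :|: [set s; t] by rewrite hS inE.
rewrite !inE; case/orP => [/imsetP [i _ ->]|/orP [/eqP->|/eqP->]]; by eauto.
Qed.

Lemma inVC x : (x \in VC c) = (x != s) && (x != t).
Proof.
case: (vert_cases x) => [->|[->|[i ->]]].
- by rewrite (negbTE sVC) eqxx.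
- by rewrite (negbTE tVC) eqxx andbF.
- by rewrite cVC hcs hct.
Qed.

Definition coef (e : E) : R :=
  (val e == [set s; t])%:R + k%:R * (#|val e :&: VC c| == 1%N)%:R
  + (val e \subset ~: [set s; t])%:R * (ell c e)%:R.

Lemma C_lhsE (x : E -> R) : C_lhs c s t x = \sum_e coef e * x e.
Proof.
rewrite /C_lhs /coef.
symmetry; under eq_bigr do rewrite !mulrDl; symmetry.
rewrite !big_split /=; congr (_ + _ + _).
- rewrite big_mkcond /=; apply: eq_bigr => e _.
  by case: (sval e == [set s; t]) => /=; rewrite ?mul1r ?mul0r.
- rewrite mulr_sumr big_mkcond /=; apply: eq_bigr => e _.
  by case: (#|sval e :&: VC c| == 1%N) => /=; rewrite ?mulr1 ?mulr0 ?mul0r.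
- rewrite big_mkcond /=; apply: eq_bigr => e _.
  by case: (sval e \subset ~: [set s; t]) => /=; rewrite ?mul1r ?mul0r.
Qed.

Lemma ell_idxC (i j : 'I_m) : ell_idx i j = ell_idx j i.
Proof.
rewrite /ell_idx.
have -> : (if (j <= i)%N then (i - j) else (j - i))%N =
          (if (i <= j)%N then (j - i) else (i - j))%N.
  by case: (leqP i j); case: (leqP j i) => // h1 h2; lia.
by [].
Qed.

Lemma ell_mk (i j : 'I_m) : i != j -> ell c (mk (c i) (c j)) = ell_idx i j.
Proof.
move=> hij; rewrite /ell.
have hcij : c i != c j by rewrite (inj_eq cinj).
case: pickP => [[i' j'] /= /andP [hlt /eqP he] | hnone].
  move: he; rewrite mkE // => /(set2_eq hcij).
  by case=> [[/cinj <- /cinj <-] | [/cinj <- /cinj <-]] //; rewrite ell_idxC.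
case: (ltngtP i j) => h.
- by have := hnone (i, j); rewrite /= h mkE // eqxx.
- by have := hnone (j, i); rewrite /= h mkE // setUC eqxx.
- by move: hij; rewrite (val_inj h) eqxx.
Qed.

Lemma sub_nst x y : ([set x; y] \subset ~: [set s; t]) = (x \in VC c) && (y \in VC c).
Proof. by rewrite subUset !sub1set !inE !inVC !negb_or. Qed.

Lemma IVC_cross x y : x \notin VC c -> y \in VC c -> [set x; y] :&: VC c = [set y].
Proof.
move=> hx hy; apply/setP => z; rewrite !inE.
case: (eqVneq z y) => [->|nzy]; first by rewrite hy orbT.
by case: (eqVneq z x) => [->|] //=; rewrite (negbTE hx).
Qed.

Lemma IVC_both x y : x \in VC c -> y \in VC c -> [set x; y] :&: VC c = [set x; y].
Proof. by move=> hx hy; apply/setIidPl; rewrite subUset !sub1set hx hy. Qed.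

Lemma IVC_none x y : x \notin VC c -> y \notin VC c -> [set x; y] :&: VC c = set0.
Proof.
move=> hx hy; apply/setP => z; rewrite !inE.
apply/negbTE/andP => -[/orP [/eqP->|/eqP->]]; exact/negP.
Qed.

Lemma coef_mk x y : x != y -> coef (mk x y) =
  ([set x; y] == [set s; t])%:R + k%:R * (#|[set x; y] :&: VC c| == 1%N)%:R
  + ((x \in VC c) && (y \in VC c))%:R * (ell c (mk x y))%:R.
Proof. by move=> h; rewrite /coef mkE // sub_nst. Qed.

Lemma st_not_VC x y : x \in VC c -> ([set x; y] == [set s; t]) = false.
Proof.
move=> hx; apply/negbTE/eqP => h.
have : x \in [set s; t] by rewrite -h !inE eqxx.
by rewrite !inE; move: hx; rewrite inVC; case/andP => /negbTE -> /negbTE ->.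
Qed.

Lemma coef_st : coef (mk s t) = 1.
Proof.
by rewrite coef_mk // eqxx IVC_none ?sVC ?tVC // cards0 (negbTE sVC) /=; ring.
Qed.

Lemma coef_cross x y : x \notin VC c -> y \in VC c -> coef (mk x y) = k%:R.
Proof.
move=> hx hy.
have hxy : x != y by apply: contraNneq hx => ->.
rewrite coef_mk // setUC st_not_VC // setUC IVC_cross // cards1 (negbTE hx) /=; ring.
Qed.

Lemma coef_in (i j : 'I_m) : i != j -> coef (mk (c i) (c j)) = (ell_idx i j)%:R.
Proof.
move=> hij; have hcij : c i != c j by rewrite (inj_eq cinj).
rewrite coef_mk // st_not_VC ?cVC // IVC_both ?cVC // cards2 hcij ell_mk //=; ring.
Qed.

Lemma ell_idx_ge1 (i j : 'I_m) : i != j -> (1 <= ell_idx i j)%N.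
Proof.
move=> hij; rewrite /ell_idx.
have hi := ltn_ord i; have hj := ltn_ord j.
have : (nat_of_ord i != nat_of_ord j) by [].
case: (leqP i j) => h1 h2; case: ifP => _; lia.
Qed.

Lemma coef_ge1 e : 1 <= coef e.
Proof.
have [x [y [hxy ->]]] := edge_mk e.
case: (vert_cases x) => [?|[?|[i ?]]]; case: (vert_cases y) => [?|[?|[j ?]]]; subst.
- by rewrite eqxx in hxy.
- by rewrite coef_st.
- by rewrite coef_cross ?sVC ?cVC // ler1n.
- by rewrite mkC coef_st.
- by rewrite eqxx in hxy.
- by rewrite coef_cross ?tVC ?cVC // ler1n.
- by rewrite mkC coef_cross ?sVC ?cVC // ler1n.
- by rewrite mkC coef_cross ?tVC ?cVC // ler1n.
- have hij : i != j by apply: contraNneq hxy => ->.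
  by rewrite coef_in // ler1n ell_idx_ge1.
Qed.

Lemma coef_ge0 e : 0 <= coef e.
Proof. exact: le_trans (coef_ge1 e). Qed.


Lemma chi_sum (D : {set E}) (g : E -> R) : \sum_e g e * chi R D e = \sum_(e in D) g e.
Proof.
rewrite [RHS]big_mkcond; apply: eq_bigr => e _; rewrite /chi.
by case: (e \in D); rewrite ?mulr1 ?mulr0.
Qed.

Lemma lhs_cyc L (v : 'I_L -> 'I_n) : (3 <= L)%N -> injective v ->
  C_lhs c s t (chi R (cyc v)) = \sum_i coef (mk (v i) (v (ordS i))).
Proof. by move=> h1 h2; rewrite C_lhsE chi_sum cyc_sum. Qed.

Lemma notVC x : x \notin VC c -> x = s \/ x = t.
Proof.
rewrite inVC negb_and !negbK; case/orP => /eqP; tauto.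
Qed.

Lemma cyc_bound L (v : 'I_L -> 'I_n) : odd L -> (3 <= L)%N -> injective v ->
  m%:R <= \sum_i coef (mk (v i) (v (ordS i))).
Proof.
move=> hL hL3 vinj.
pose F := fun i => coef (mk (v i) (v (ordS i))).
have hne : forall i, v i != v (ordS i).
  by move=> i; rewrite (inj_eq vinj) eq_sym ordS_neq //; lia.
pose cross i := (v i \in VC c) != (v (ordS i) \in VC c).
have Fcross : forall i, cross i -> F i = k%:R.
  move=> i; rewrite /cross /F; case: (boolP (v i \in VC c)) => h1; case: (boolP (v (ordS i) \in VC c)) => h2 //= _.
    by rewrite mkC coef_cross.
  by rewrite coef_cross.
case: (boolP [forall i, v i \in VC c]) => hall.
  have : forall i, exists j, v i = c j.
    by move=> i; have /imsetP [j _ ->] := forallP hall i; exists j.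
  case/fin_all_exists => p hp.
  have hpne : forall i, p i != p (ordS i).
    by move=> i; have := hne i; rewrite !hp (inj_eq cinj).
  rewrite (eq_bigr (fun i => (ell_idx (p i) (p (ordS i)))%:R)); last first.
    by move=> i _; rewrite !hp coef_in.
  by rewrite -natr_sum ler_nat winding.
move: hall; rewrite negb_forall => /existsP [i0 hi0].
have [i1 hi1] : exists i1, cross i1.
  case: (boolP [exists i, cross i]) => [/existsP //|].
  rewrite negb_exists => /forallP hnc.
  have e1 : (v (ordS i0) \in VC c) = false.
    by have := hnc i0; rewrite /cross (negbTE hi0) /= negbK => /eqP <-.
  have e2 : (v (ordS (ordS i0)) \in VC c) = false.
    by have := hnc (ordS i0); rewrite /cross e1 /= negbK => /eqP <-.
  have d1 : i0 != ordS i0 by rewrite eq_sym ordS_neq //; lia.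
  have d2 : ordS i0 != ordS (ordS i0) by rewrite eq_sym ordS_neq //; lia.
  have d3 : i0 != ordS (ordS i0) by rewrite eq_sym ordS2_neq.
  move: d1 d2 d3; rewrite -!(inj_eq vinj).
  case: (notVC hi0) => ->; case: (notVC (negbT e1)) => ->; case: (notVC (negbT e2)) => ->;
    by rewrite ?eqxx.
have [i2 /andP [hi21 hi2]] : exists i2, (i2 != i1) && cross i2.
  case: (boolP [exists i, (i != i1) && cross i]) => [/existsP //|].
  rewrite negb_exists => /forallP hnc.
  pose f i : R := (v i \in VC c)%:R.
  have htel : \sum_i (f (ordS i) - f i) = 0.
    by rewrite sumrB [X in _ - X](reindex_inj (@ordS_inj L)) subrr.
  move: htel; rewrite (bigD1 i1) //= big1 ?addr0; last first.
    move=> i hi; have := hnc i; rewrite hi /= /cross negbK => /eqP h.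
    by rewrite /f h subrr.
  move: hi1; rewrite /cross /f.
  by case: (v i1 \in VC c); case: (v (ordS i1) \in VC c) => //= _ /eqP; rewrite ?subr0 ?sub0r ?oppr_eq0 oner_eq0.
have [i3 /andP [hi31 hi32]] : exists i3, (i3 != i1) && (i3 != i2).
  case: (eqVneq (ordS i1) i2) => h.
    exists (ordS i2); rewrite -h ordS2_neq //= ordS_neq //; lia.
  by exists (ordS i1); rewrite h ordS_neq //; lia.
rewrite (bigD1 i1) //= (bigD1 i2) //= (bigD1 i3) /=; last by rewrite hi31 hi32.
rewrite -/(F i1) -/(F i2) -/(F i3) Fcross // Fcross // addrA.
have h0 : 0 <= \sum_(i | (i != i1) && (i != i2) && (i != i3)) coef (mk (v i) (v (ordS i))).
  by apply: sumr_ge0 => i _; apply: coef_ge0.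
have := coef_ge1 (mk (v i3) (v (ordS i3))).
rewrite -/(F i3) natrD natrM => h3.
have -> : (2%:R : R) * k%:R = k%:R + k%:R by ring.
lra.
Qed.

Lemma odd_cycle_bound D : is_odd_cycle D -> m%:R <= C_lhs c s t (chi R D).
Proof.
case=> L [v [hL h3 hinj ->]].
have := lhs_cyc h3 hinj; rewrite /cyc => ->; exact: cyc_bound.
Qed.

Lemma valid : valid_ineq (@Podd_up R n) (C_lhs c s t) m%:R.
Proof.
move=> x [y [[lam [hl0 hlc hl1 hly]] hyx]].
apply: (@le_trans _ _ (C_lhs c s t y)); last first.
  rewrite !C_lhsE; apply: ler_sum => e _; apply: ler_wpM2l => //; exact: coef_ge0.
have -> : C_lhs c s t y = \sum_D lam D * C_lhs c s t (chi R D).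
  rewrite C_lhsE; under eq_bigr do rewrite hly mulr_sumr.
  rewrite exchange_big /=; apply: eq_bigr => D _.
  rewrite C_lhsE mulr_sumr; apply: eq_bigr => e _; ring.
have -> : (m%:R : R) = \sum_D lam D * m%:R by rewrite -mulr_suml hl1 mul1r.
apply: ler_sum => D _.
case: (eqVneq (lam D) 0) => [->|hD]; first by rewrite !mul0r.
apply: ler_wpM2l => //; exact: odd_cycle_bound (hlc D hD).
Qed.

Definition tri (x y z : 'I_n) : {set E} := cyc (fun i : 'I_3 => nth x [:: x; y; z] i).

Lemma tri_inj (x y z : 'I_n) : x != y -> y != z -> x != z ->
  injective (fun i : 'I_3 => nth x [:: x; y; z] i).
Proof.
move=> hxy hyz hxz [[|[|[|?]]] hi] [[|[|[|?]]] hj] //= h; apply: val_inj => //=;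
  move: h hxy hyz hxz; try move=> ->; rewrite ?eqxx //; move=> ->; rewrite eqxx //.
Qed.

Lemma tri_odd x y z : x != y -> y != z -> x != z -> is_odd_cycle (tri x y z).
Proof. by move=> h1 h2 h3; apply: cyc_odd => //; apply: tri_inj. Qed.

Lemma tri_sum x y z (g : E -> R) : x != y -> y != z -> x != z ->
  \sum_(e in tri x y z) g e = g (mk x y) + g (mk y z) + g (mk z x).
Proof.
move=> h1 h2 h3; rewrite /tri cyc_sum //; last exact: tri_inj.
by rewrite !big_ord_recl big_ord0 addr0 /= addrA.
Qed.

Lemma m_gt0 : (0 < m)%N. Proof. lia. Qed.

Definition inZm (j : nat) : 'I_m := Ordinal (ltn_pmod j m_gt0).

Lemma val_ordS L (i : 'I_L) : val (ordS i) = (i.+1 %% L)%N.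
Proof. by []. Qed.

Lemma ordS_inZm j : ordS (inZm j) = inZm j.+1.
Proof. by apply: val_inj; rewrite /= -addn1 modnDml addn1. Qed.

Lemma inZm_val (i : 'I_m) : inZm i = i.
Proof. by apply: val_inj; rewrite /= modn_small. Qed.

Definition arc (a l : nat) : {set E} := cyc (fun r : 'I_l.+1 => c (inZm (a + r))).

Lemma arc_inj a l : (l < m)%N -> injective (fun r : 'I_l.+1 => c (inZm (a + r))).
Proof.
move=> hl r1 r2 /cinj /(congr1 val) /= /eqP; rewrite eqn_modDl => /eqP.
have h1 := ltn_ord r1; have h2 := ltn_ord r2.
by rewrite !modn_small; try lia; move=> h; apply: val_inj.
Qed.

Lemma arc_sum a l (g : E -> R) : (2 <= l)%N -> (l < m)%N ->
  \sum_(e in arc a l) g e =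
  \sum_(r < l) g (mk (c (inZm (a + r))) (c (ordS (inZm (a + r)))))
  + g (mk (c (inZm (a + l))) (c (inZm a))).
Proof.
move=> hl2 hlm; rewrite /arc cyc_sum; [|lia|exact: arc_inj].
rewrite big_ord_recr /=; congr (_ + g (mk _ (c _))).
  apply: eq_bigr => r _; congr (g (mk _ (c _))).
  rewrite ordS_inZm; congr inZm; rewrite /= modn_small; [lia|].
  have := ltn_ord r; lia.
by apply: val_inj; rewrite /= modnn addn0.
Qed.

Definition Dc : {set E} := cyc c.

Lemma m_ge3 : (3 <= m)%N. Proof. lia. Qed.

Lemma Dc_odd : is_odd_cycle Dc.
Proof. apply: cyc_odd => //; [by rewrite oddD oddM | exact: m_ge3]. Qed.

Definition Q (e : E) : {set E} :=
  if val e == [set s; t] then Dc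
  else if [pick i | val e == [set s; c i]] is Some i then tri s (c i) (c (ordS i))
  else if [pick i | val e == [set t; c i]] is Some i then tri t (c i) (c (ordS i))
  else if [pick i | val e == [set c i; c (ordS i)]] is Some i then tri s t (c i)
  else if [pick ij : 'I_m * 'I_m | (ij.1 < ij.2)%N && (val e == [set c ij.1; c ij.2])]
    is Some ij then
      (if odd (ij.2 - ij.1) then arc ij.2 (m - (ij.2 - ij.1)) else arc ij.1 (ij.2 - ij.1))
  else set0.

Lemma ciS i : c i != c (ordS i).
Proof. by rewrite (inj_eq cinj) eq_sym ordS_neq //; lia. Qed.

Lemma Q_spec e :
  (e = mk s t /\ Q e = Dc) \/
      (exists i, e = mk s (c i) /\ Q e = tri s (c i) (c (ordS i))) \/
      (exists i, e = mk t (c i) /\ Q e = tri t (c i) (c (ordS i))) \/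
      (exists i, e = mk (c i) (c (ordS i)) /\ Q e = tri s t (c i)) \/
      (exists a l, [/\ (a < m)%N, (2 <= l < m)%N, ~~ odd l, Q e = arc a l &
                    e = mk (c (inZm (a + l))) (c (inZm a))]).
Proof.
rewrite /Q; case: ifP => [/eqP h1|h1].
  by left; split => //; apply: val_inj; rewrite mkE.
case: pickP => [i /eqP h2|h2].
  by right; left; exists i; split => //; apply: val_inj; rewrite mkE // eq_sym hcs.
case: pickP => [i /eqP h3|h3].
  by do 2 right; left; exists i; split => //; apply: val_inj; rewrite mkE // eq_sym hct.
case: pickP => [i /eqP h4|h4].
  by do 3 right; left; exists i; split => //; apply: val_inj; rewrite mkE // ciS.
case: pickP => [[i j] /= /andP [hij /eqP h5]|h5].
  do 4 right.
  have hi := ltn_ord i; have hj := ltn_ord j.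
  have hce : e = mk (c i) (c j).
    by apply: val_inj; rewrite mkE // (inj_eq cinj) neq_ltn hij.
  case: ifP => ho.
    have hh : (j - i != m - 1)%N.
      apply/negP => /eqP hh; move: ho; rewrite hh oddB; [|lia].
      by rewrite oddD oddM.
    have hh2 : (j - i < m - 1)%N by rewrite ltn_neqAle hh /=; lia.
    exists j, (m - (j - i))%N; split => //.
    - by apply/andP; split; lia.
    - rewrite oddB; [|lia]; by rewrite ho oddD oddM.
    - rewrite hce; congr (mk (c _) (c _)); apply: val_inj => /=.
      + have -> : (j + (m - (j - i)) = i + m)%N by lia.
        by rewrite modnDr modn_small.
      + by rewrite modn_small.
  have hh : (j - i != 1)%N by apply/negP => /eqP hh; rewrite hh in ho.
  have hh2 : (1 < j - i)%N by rewrite ltn_neqAle eq_sym hh /=; lia.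
  exists i, (j - i)%N; split => //.
  - by apply/andP; split; lia.
  - by rewrite ho.
  - rewrite hce mkC; congr (mk (c _) (c _)); apply: val_inj => /=.
    + have -> : (i + (j - i) = j)%N by lia.
      by rewrite modn_small.
    + by rewrite modn_small.
exfalso.
have [x [y [hxy he]]] := edge_mk e.
have hv := mkE hxy; rewrite -he in hv.
case: (vert_cases x) => [?|[?|[i ?]]]; case: (vert_cases y) => [?|[?|[j ?]]]; subst x y.
- by rewrite eqxx in hxy.
- by rewrite hv eqxx in h1.
- by have := h2 j; rewrite hv eqxx.
- by rewrite hv setUC eqxx in h1.
- by rewrite eqxx in hxy.
- by have := h3 j; rewrite hv eqxx.
- by have := h2 i; rewrite hv setUC eqxx.
- by have := h3 i; rewrite hv setUC eqxx.
- have hij : i != j by apply: contraNneq hxy => ->.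
  case: (ltngtP i j) => hh.
  + by have := h5 (i, j); rewrite /= hh hv eqxx.
  + by have := h5 (j, i); rewrite /= hh hv setUC eqxx.
  + by move: hij; rewrite (val_inj hh) eqxx.
Qed.

Lemma coef_Cedge i : coef (mk (c i) (c (ordS i))) = 1.
Proof.
rewrite coef_in ?ciS; last by rewrite eq_sym ordS_neq //; lia.
have hi := ltn_ord i.
rewrite /ell_idx val_ordS; case: (ltnP i.+1 m) => h.
  rewrite modn_small //.
  have -> : ((if (i <= i.+1)%N then (i.+1 - i) else (i - i.+1)) = 1)%N by rewrite leqnSn; lia.
  by [].
have hi' : nat_of_ord i = (2 * k)%N by lia.
have -> : (i.+1 %% m = 0)%N by rewrite (_ : i.+1 = m); [rewrite modnn | lia].
have -> : ((if (i <= 0)%N then (0 - i) else (i - 0)) = 2 * k)%N.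
  by case: leqP; lia.
rewrite oddM /=; have -> : (m - 2 * k = 1)%N by lia.
by [].
Qed.

Lemma lhs_Dc : C_lhs c s t (chi R Dc) = m%:R.
Proof.
rewrite /Dc lhs_cyc //; last exact: m_ge3.
by rewrite (eq_bigr (fun _ => 1)) ?sumr_const ?card_ord // => i _; apply: coef_Cedge.
Qed.

Lemma lhs_tri x y z : x != y -> y != z -> x != z ->
  C_lhs c s t (chi R (tri x y z)) = coef (mk x y) + coef (mk y z) + coef (mk z x).
Proof. by move=> h1 h2 h3; rewrite C_lhsE chi_sum tri_sum. Qed.

Lemma inZm_neq a l : (2 <= l)%N -> (l < m)%N -> inZm (a + l) != inZm a.
Proof.
move=> h1 h2; apply/negP => /eqP h.
have := @arc_inj a l h2 ord_max ord0.
rewrite /= addn0 h => /(_ erefl) /(congr1 val) /=; lia.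
Qed.

Lemma ell_chord a l : (a < m)%N -> (2 <= l)%N -> (l < m)%N -> ~~ odd l ->
  ell_idx (inZm (a + l)) (inZm a) = (m - l)%N.
Proof.
move=> ha h1 h2 ho; rewrite /ell_idx /= (modn_small ha).
case: (ltnP (a + l) m) => h.
  rewrite modn_small //.
  have -> : ((if (a + l <= a)%N then (a - (a + l)) else (a + l - a)) = l)%N.
    by case: leqP; lia.
  by rewrite (negbTE ho).
have -> : ((a + l) %% m = a + l - m)%N.
  by rewrite -{1}(subnK h) modnDr modn_small; lia.
have -> : ((if (a + l - m <= a)%N then (a - (a + l - m)) else (a + l - m - a)) = m - l)%N.
  by case: leqP; lia.
have hod : odd (m - l) by rewrite oddB; [rewrite oddD oddM (negbTE ho) | lia].
by rewrite hod.
Qed.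

Lemma lhs_arc a l : (a < m)%N -> (2 <= l)%N -> (l < m)%N -> ~~ odd l ->
  C_lhs c s t (chi R (arc a l)) = m%:R.
Proof.
move=> ha h1 h2 ho; rewrite C_lhsE chi_sum arc_sum //.
rewrite (eq_bigr (fun _ => 1)); last by move=> r _; apply: coef_Cedge.
rewrite sumr_const card_ord coef_in ?inZm_neq // ell_chord //.
by rewrite natrB; [ring | lia].
Qed.

Lemma arc_odd a l : (2 <= l)%N -> (l < m)%N -> ~~ odd l -> is_odd_cycle (arc a l).
Proof. by move=> h1 h2 ho; apply: cyc_odd; [rewrite /= ho | lia | exact: arc_inj]. Qed.

Lemma mk_m : (k%:R + 1 + k%:R : R) = m%:R.
Proof. by rewrite natrD natrM; ring. Qed.

Lemma Q_good e : is_odd_cycle (Q e) /\ C_lhs c s t (chi R (Q e)) = m%:R.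
Proof.
have hsc : forall i, s != c i by move=> i; rewrite eq_sym.
have htc : forall i, t != c i by move=> i; rewrite eq_sym.
case: (Q_spec e) => [[_ ->]|[[i [_ ->]]|[[i [_ ->]]|[[i [_ ->]]|[a [l [ha /andP [h1 h2] ho -> _]]]]]]].
- by split; [exact: Dc_odd | exact: lhs_Dc].
- split; first by apply: tri_odd; rewrite ?ciS.
  rewrite lhs_tri ?ciS // coef_cross ?sVC ?cVC // coef_Cedge mkC coef_cross ?sVC ?cVC //.
  exact: mk_m.
- split; first by apply: tri_odd; rewrite ?ciS.
  rewrite lhs_tri ?ciS // coef_cross ?tVC ?cVC // coef_Cedge mkC coef_cross ?tVC ?cVC //.
  exact: mk_m.
- split; first by apply: tri_odd; rewrite ?hsc ?htc.
  rewrite lhs_tri ?hsc ?htc // coef_st coef_cross ?tVC ?cVC // mkC coef_cross ?sVC ?cVC //.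
  by rewrite -mk_m; ring.
- by split; [exact: arc_odd | exact: lhs_arc].
Qed.

Lemma hsc i : s != c i. Proof. by rewrite eq_sym. Qed.
Lemma htc i : t != c i. Proof. by rewrite eq_sym. Qed.

Lemma Q_st : Q (mk s t) = Dc.
Proof. by rewrite /Q mkE // eqxx. Qed.

Lemma Q_s i : Q (mk s (c i)) = tri s (c i) (c (ordS i)).
Proof.
rewrite /Q mkE ?hsc // set2_eq_l ?hsc // (negbTE (hct i)).
rewrite (@pick_some _ _ i) // => j.
by rewrite set2_eq_l ?hsc // (inj_eq cinj) eq_sym.
Qed.

Lemma Q_t i : Q (mk t (c i)) = tri t (c i) (c (ordS i)).
Proof.
rewrite /Q mkE ?htc // [[set s; t]]setUC set2_eq_l ?htc 1?eq_sym // (negbTE (hsc i)).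
rewrite pick_none; last first.
  move=> j; apply/negbTE/eqP => h.
  have : t \in [set s; c j] by rewrite -h !inE eqxx.
  by rewrite !inE eq_sym (negbTE hst) /= eq_sym (negbTE (hct j)).
rewrite (@pick_some _ _ i) // => j.
by rewrite set2_eq_l ?htc // (inj_eq cinj) eq_sym.
Qed.

Lemma Q_C i : Q (mk (c i) (c (ordS i))) = tri s t (c i).
Proof.
rewrite /Q mkE ?ciS // st_not_VC ?cVC //.
rewrite pick_none; last first.
  move=> j; apply/negbTE/eqP => h.
  have : s \in [set c i; c (ordS i)] by rewrite h !inE eqxx.
  by rewrite !inE eq_sym (negbTE (hcs i)) /= eq_sym (negbTE (hcs _)).
rewrite pick_none; last first.
  move=> j; apply/negbTE/eqP => h.
  have : t \in [set c i; c (ordS i)] by rewrite h !inE eqxx.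
  by rewrite !inE eq_sym (negbTE (hct i)) /= eq_sym (negbTE (hct _)).
rewrite (@pick_some _ _ i) // => j.
apply/eqP/eqP => [h|->] //.
case: (set2_eq (ciS i) h) => [[/cinj -> _] // | [/cinj h1 /cinj h2]].
by have := ordS2_neq j m_ge3; rewrite -h1 -h2 eqxx.
Qed.

Lemma orth (w : E -> R) : (forall f, \sum_e chi R (Q f) e * w e = 0) -> forall e, w e = 0.
Proof.
move=> hw.
have W : forall f, \sum_(e in Q f) w e = 0.
  by move=> f; rewrite -chi_sum; apply: etrans (hw f); apply: eq_bigr => e _; rewrite mulrC.
pose a i := w (mk s (c i)); pose b i := w (mk t (c i)).
pose g i := w (mk (c i) (c (ordS i))); pose z := w (mk s t).
have hs : forall i, a i + g i + a (ordS i) = 0.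
  move=> i; have := W (mk s (c i)); rewrite Q_s tri_sum ?hsc ?ciS //.
  by rewrite [mk (c (ordS i)) s]mkC.
have ht : forall i, b i + g i + b (ordS i) = 0.
  move=> i; have := W (mk t (c i)); rewrite Q_t tri_sum ?htc ?ciS //.
  by rewrite [mk (c (ordS i)) t]mkC.
have hC : forall i, z + b i + a i = 0.
  move=> i; have := W (mk (c i) (c (ordS i))); rewrite Q_C tri_sum ?hsc ?htc //.
  by rewrite [mk (c i) s]mkC.
have hD : \sum_i g i = 0.
  by have := W (mk s t); rewrite Q_st /Dc cyc_sum //; exact: m_ge3.
have hab : forall i, a i = b i.
  move=> i; apply/eqP; rewrite -subr_eq0; apply/eqP; move: i.
  apply: (@alt_zero R m (fun i => a i - b i)); first by rewrite oddD oddM.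
  move=> i; have := hs i; have := ht i; lra.
have hg : forall i, g i = z.
  move=> i; have := hs i; have := hC i; have := hC (ordS i); rewrite !hab; lra.
have hz : z = 0.
  move: hD; rewrite (eq_bigr (fun _ => z)) ?sumr_const ?card_ord // => /eqP.
  rewrite mulrn_eq0 => /orP [/eqP hm|/eqP //]; lia.
have ha : forall i, a i = 0 by move=> i; have := hC i; rewrite hab hz; lra.
have hb : forall i, b i = 0 by move=> i; rewrite -hab.
move=> e.
case: (Q_spec e) => [[-> _]|[[i [-> _]]|[[i [-> _]]|[[i [-> _]]|[a0 [l [ha0 /andP [h1 h2] ho hq he]]]]]]].
- exact: hz.
- exact: ha.
- exact: hb.
- by rewrite -/(g i) hg.
have := W e; rewrite hq arc_sum // big1 ?add0r -?he // => r _.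
by rewrite -/(g _) hg.
Qed.

Lemma chi_Podd D : is_odd_cycle D -> @Podd R n (chi R D).
Proof.
move=> hD; exists (fun D' => if D' == D then 1 else 0); split.
- by move=> D'; case: ifP.
- by move=> D'; case: ifP => [/eqP -> //|]; rewrite eqxx.
- rewrite (bigD1 D) //= eqxx big1 ?addr0 // => D' hD'.
  by case: ifP => // /eqP hh; rewrite hh eqxx in hD'.
- move=> e; rewrite (bigD1 D) //= eqxx mul1r big1 ?addr0 // => D' hD'.
  by case: ifP => [/eqP hh|]; [rewrite hh eqxx in hD' | rewrite mul0r].
Qed.

Lemma facet : defines_facet (@Podd_up R n) (C_lhs c s t) m%:R.
Proof.
split; first exact: valid.
have : (0 < #|{: E}|)%N by apply/card_gt0P; exists e0.
case hE: #|{: E}| => [//|d] _; exists d; rewrite /has_affdim -hE; split; split.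
- pose p (i : 'I_#|{: E}|.+1) (e : E) : R := chi R Dc e + (i == lift ord0 (enum_rank e))%:R.
  exists p; split.
    move=> i; exists (chi R Dc); split; first exact: chi_Podd Dc_odd.
    by move=> e; rewrite /p lerDl ler0n.
  move=> mu h1 h2.
  have hl : forall e, mu (lift ord0 (enum_rank e)) = 0.
    move=> e; have := h2 e; rewrite /p.
    under eq_bigr do rewrite mulrDr.
    rewrite big_split /= -mulr_suml h1 mul0r add0r.
    rewrite (bigD1 (lift ord0 (enum_rank e))) //= eqxx mulr1 big1 ?addr0 //.
    by move=> i /negbTE ->; rewrite mulr0.
  move=> i; case: (unliftP ord0 i) => [j ->|->].
    by rewrite -(enum_valK j); apply: hl.
  move: h1; rewrite big_ord_recl big1 ?addr0 //.
  by move=> j _; rewrite -(enum_valK j); apply: hl.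
- by move=> p _; apply: aff_dep_full; exact: leqnn.
- exists (fun i => chi R (Q (enum_val i))); split.
    move=> i; have [h1 h2] := Q_good (enum_val i); split => //.
    by exists (chi R (Q (enum_val i))); split => //; apply: chi_Podd.
  move=> mu h1 h2 i.
  have := @indep_orth R E (fun f e => chi R (Q f) e) orth (fun f => mu (enum_rank f)).
  rewrite -(enum_valK i); apply => e.
  by rewrite sum_enum; apply: etrans (h2 e); apply: eq_bigr => j _; rewrite enum_valK.
- move=> p hp.
  apply: (@aff_dep_face R E p coef m%:R e0).
    by rewrite gt_eqF // (lt_le_trans ltr01) ?coef_ge1.
  by move=> i; have [_ <-] := hp i; rewrite C_lhsE.
Qed.
End Main.

Theorem lemma6 (R : realFieldType) (n k : nat) (c : 'I_(2 * k + 1) -> 'I_n)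
  (s t : 'I_n) :
  (5 <= n)%N -> odd n -> k = ((n - 3) %/ 2)%N ->
  injective c -> s != t -> (forall i, c i != s) -> (forall i, c i != t) ->
  valid_ineq (@Podd_up R n) (C_lhs c s t) (2 * k + 1)%:R /\
  defines_facet (@Podd_up R n) (C_lhs c s t) (2 * k + 1)%:R.
Proof.
move=> h5 hodd hk cinj hst hcs hct.
have h2 : (n %% 2 = 1)%N by rewrite modn2 hodd.
have hk1 : (1 <= k)%N by lia.
have hn : n = (2 * k + 3)%N by lia.
split; [exact: valid | exact: facet].
Qed.
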